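(* Let $\mathcal{H}$ be a PICOD hypergraph with $\eta(\mathcal{H})=\Delta(\mathcal{H})$. Then $\beta_q(\mathcal{H})=\Delta(\mathcal{H})$ for every prime power $q$, and hence $\beta(\mathcal{H})=\Delta(\mathcal{H})$.
   Context: PICOD problem: a server holds $m$ messages $b_1,\dots,b_m\in\mathbb{F}_q$; there are $n$ clients, client $i$ having side-information $\{b_j: j\in S_i\}$, $S_i\subseteq[m]$, and request-set $R_i=[m]\setminus S_i$ (assumed non-empty); client $i$ wants any one message $b_j$ with $j\in R_i$. A PICOD scheme of length $\ell$ over $\mathbb{F}_q$ is an encoding map $\phi:\mathbb{F}_q^m\to\mathbb{F}_q^\ell$ such that for every client $i$ there is an index $j_i\in R_i$ and a function $\psi_i$ with $\psi_i(\phi(b),(b_k)_{k\in S_i})=b_{j_i}$ for all $b\in\mathbb{F}_q^m$. The PICOD hypergraph $\mathcal{H}=(\mathcal{V},\mathcal{E})$ has vertex set $[m]$ and edge set $\{R_i:i\in[n]\}$. $\beta_q(\mathcal{H})$ is the minimum length of a PICOD scheme over $\mathbb{F}_q$, and $\beta(\mathcal{H})=\min_q\beta_q(\mathcal{H})$. The degree of a vertex is the number of edges containing it; $\Delta(\mathcal{H})$ is the maximum degree. A nested collection of hyperedges of nesting length $L$ is a family $\mathcal{E}_1,\dots,\mathcal{E}_L\subseteq\mathcal{E}$ with $|\mathcal{E}_i|=2^{i-1}$, such that for every $i\in[L-1]$ and every $R\in\mathcal{E}_i$ there exist non-empty edges $R',R''\in\mathcal{E}_{i+1}$ with $R',R''\subsetneq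 R$ and $R'\cap R''=\emptyset$. The nesting number $\eta(\mathcal{H})$ is the maximum nesting length of such a collection in $\mathcal{H}$. *)

(* Defs.v *)
From mathcomp Require Import all_boot all_order all_algebra all_field.
Set Implicit Arguments. Unset Strict Implicit. Unset Printing Implicit Defensive.
Import GRing.Theory.

(* A PICOD instance with m messages and n clients is given by the request
   sets R : 'I_n -> {set 'I_m}; the side information of client i is
   S_i = ~: R i. *)

Section PICOD.
Variables (m n : nat) (R : 'I_n -> {set 'I_m}).

Definition picod_edges : {set {set 'I_m}} := [set R i | i : 'I_n].

Definition side_info (i : 'I_n) : {set 'I_m} := ~: R i.

Definition vdegree (v : 'I_m) : nat := #|[set e in picod_edges | v \in e]|.

Definition max_degree : nat := \max_(v : 'I_m) vdegree v.

(* Es i is the paper's E_{i+1} (0-based indexing). *)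
Definition nested_collection (L : nat) (Es : {ffun 'I_L -> {set {set 'I_m}}}) : bool :=
  [forall i : 'I_L, (Es i \subset picod_edges) && (#|Es i| == 2 ^ i)] &&
  [forall i : 'I_L, forall j : 'I_L, (j == i.+1 :> nat) ==>
     [forall e in Es i, exists e1 in Es j, exists e2 in Es j,
        [&& e1 != set0, e2 != set0, e1 \proper e, e2 \proper e
          & [disjoint e1 & e2]]]].

Definition has_nested (L : nat) : bool :=
  [exists Es : {ffun 'I_L -> {set {set 'I_m}}}, nested_collection Es].

(* nesting number eta(H).  Any nested collection of length L >= 1 has
   2^(L-1) distinct edges, all subsets of 'I_m, so L <= m + 1; hence the
   maximum over L < m.+2 is the maximum over all L. *)
Definition nesting_number : nat := \max_(L < m.+2 | has_nested L) L.

Definition picod_scheme (F : fieldType) (l : nat) (phi : 'rV[F]_m -> 'rV[F]_l) : Prop :=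
  forall i : 'I_n, exists2 j : 'I_m, j \in R i &
    exists psi : 'rV[F]_l -> 'rV[F]_m -> F,
      forall b : 'rV[F]_m,
        psi (phi b) (\row_k (if k \in side_info i then b ord0 k else 0%R))%R = b ord0 j.

Definition has_picod_scheme (F : fieldType) (l : nat) : Prop :=
  exists phi : 'rV[F]_m -> 'rV[F]_l, picod_scheme phi.

Definition beta_q_eq (F : fieldType) (b : nat) : Prop :=
  has_picod_scheme F b /\ forall l, has_picod_scheme F l -> b <= l.

Definition beta_eq (b : nat) : Prop :=
  (exists F : finFieldType, has_picod_scheme F b) /\
  forall (F : finFieldType) l, has_picod_scheme F l -> b <= l.

End PICOD.

(* Main.v *)
Require Import Defs.
From mathcomp Require Import all_boot all_order all_algebra all_field.
From mathcomp Require Import zify.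
Set Implicit Arguments. Unset Strict Implicit. Unset Printing Implicit Defensive.
Import GRing.Theory.

Lemma sum_card_fiber (T U : finType) (A : {set T}) (g : T -> U) :
  \sum_(x : U) #|[set w in A | g w == x]| = #|A|.
Proof.
rewrite -sum1_card (partition_big g predT) //=.
apply: eq_bigr => x _; rewrite -sum1_card; apply: eq_bigl => w; by rewrite inE.
Qed.

Section Lower.
Variables (m n : nat) (R : 'I_n -> {set 'I_m}) (F : finFieldType) (l : nat).
Variable phi : 'rV[F]_m -> 'rV[F]_l.
Hypothesis Hs : picod_scheme R phi.

Definition Sag (T : {set 'I_m}) (c : 'rV[F]_m) :=
  [set b : 'rV[F]_m | [forall k, (k \notin T) ==> (b ord0 k == c ord0 k)]].
Definition Gd d T := forall c, #|F| ^ d <= #|phi @: Sag T c|.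

Lemma G0 T : Gd 0 T.
Proof.
move=> c; rewrite expn0; apply/card_gt0P; exists (phi c); apply: imset_f.
by rewrite inE; apply/forallP => k; apply/implyP.
Qed.

Lemma step i j (psi : 'rV[F]_l -> 'rV[F]_m -> F)
  (Hdec : forall b, psi (phi b) (\row_k (if k \in side_info R i then b ord0 k else 0%R))%R = b ord0 j)
  (T : {set 'I_m}) d : T \subset R i -> j \in R i -> j \notin T -> Gd d T -> Gd d.+1 (R i).
Proof.
move=> sTe je jT HG c.
set s0 := (\row_k (if k \in side_info R i then c ord0 k else 0%R))%R.
have side: forall b, b \in Sag (R i) c ->
   (\row_k (if k \in side_info R i then b ord0 k else 0%R))%R = s0.
  move=> b bS; apply/rowP => k; rewrite !mxE; case: ifP => // kS.
  move: bS; rewrite inE => /forallP /(_ k) /implyP; rewrite /side_info in kS.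
  by rewrite in_setC in kS => /(_ kS) /eqP.
rewrite -(sum_card_fiber (phi @: Sag (R i) c) (fun w => psi w s0)).
have -> : #|F| ^ d.+1 = \sum_(x : F) #|F| ^ d.
  by rewrite sum_nat_const expnS.
apply: leq_sum => x _.
set cx := (\row_k (if k == j then x else c ord0 k))%R.
apply: leq_trans (HG cx) _; apply: subset_leq_card.
apply/subsetP => w /imsetP [b bS ->].
have bS' : b \in Sag (R i) c.
  rewrite inE; apply/forallP => k; apply/implyP => kR.
  have kT : k \notin T by apply: contra kR; apply: (subsetP sTe).
  move: bS; rewrite inE => /forallP /(_ k) /implyP /(_ kT) /eqP ->.
  have kj : k != j by apply: contraNneq kR => ->.
  by rewrite /cx mxE (negbTE kj).
rewrite inE imset_f //= -(side b bS') Hdec.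
move: bS; rewrite inE => /forallP /(_ j) /implyP /(_ jT) /eqP ->.
by rewrite /cx mxE eqxx.
Qed.

Lemma lower L (Es : {ffun 'I_L -> {set {set 'I_m}}}) :
  nested_collection R Es ->
  forall d (i : 'I_L), i + d <= L -> forall e, e \in Es i -> Gd d e.
Proof.
move=> HN; case/andP: HN => /forallP H1 /forallP H2.
elim => [|d IH] i hid e eE; first exact: G0.
have/andP[sub _] := H1 i.
have := subsetP sub e eE; rewrite /picod_edges => /imsetP [i0 _ Hei]; subst e.
have [j jR [psi Hpsi]] := Hs i0.
case: d IH hid => [|d] IH hid.
  apply: (step Hpsi (T := set0)) => //; [exact: sub0set | by rewrite in_set0 | exact: G0].
have hi1 : i.+1 < L by lia.
set i' := Ordinal hi1.
have := H2 i => /forallP /(_ i'); rewrite /= eqxx /= => /forallP /(_ (R i0)) /implyP /(_ eE).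
move=> /existsP [e1 /andP [e1E /existsP [e2 /andP [e2E /and5P [_ _ p1 p2 dis]]]]].
have hid' : i' + d.+1 <= L by rewrite /=; lia.
case: (boolP (j \in e1)) => je1.
  apply: (step Hpsi (T := e2)) => //; first exact: proper_sub.
    by rewrite (disjointFr dis je1).
  exact: IH hid' e2 e2E.
apply: (step Hpsi (T := e1)) => //; first exact: proper_sub.
exact: IH hid' e1 e1E.
Qed.

Lemma nest_le L : has_nested R L -> L <= l.
Proof.
case/existsP => Es HN.
case: L Es HN => [|L] Es HN //.
have := (andP HN).1 => /forallP /(_ ord0) /andP [_ /eqP Hc].
have : 0 < #|Es ord0| by rewrite Hc.
case/card_gt0P => e eE.
have H := lower HN (d := L.+1) (i := ord0) (leqnn _) eE 0%R.
rewrite -(leq_exp2l _ _ (finNzRing_gt1 F)).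
apply: leq_trans H _.
have := max_card (mem (phi @: Sag e 0%R)).
by rewrite card_mx mul1n.
Qed.

End Lower.

Lemma upper_sets m t (E : {set {set 'I_m}}) :
  (forall e, e \in E -> e != set0) ->
  (forall v, #|[set e in E | v \in e]| <= t) ->
  exists D : 'I_t -> {set 'I_m}, forall e, e \in E -> exists k, #|e :&: D k| == 1.
Proof.
elim: t E => [|t IH] E Hne Hdeg.
  exists (fun _ => set0) => e eE; exfalso.
  have /set0Pn [v ve] := Hne e eE.
  have : e \in [set e in E | v \in e] by rewrite inE eE ve.
  have := Hdeg v; rewrite leqn0 => /eqP /cards0_eq ->; by rewrite in_set0.
pose packing (D : {set 'I_m}) := [forall e in E, #|e :&: D| <= 1].
have p0 : packing set0 by apply/forall_inP => e _; rewrite setI0 cards0.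
case: (@arg_maxnP {set 'I_m} set0 packing (fun D : {set 'I_m} => #|D|) p0) => D pD Dmax.
have key : forall e v, e \in E -> v \in e ->
    exists2 e0, e0 \in E & (v \in e0) && (#|e0 :&: D| == 1).
  move=> e v eE ve.
  case: (boolP (v \in D)) => vD.
    exists e => //; rewrite ve /= eqn_leq (forall_inP pD e eE) /=.
    by apply/card_gt0P; exists v; rewrite inE ve vD.
  have : ~~ packing (v |: D).
    apply/negP => pvD; have := Dmax _ pvD; rewrite cardsU1 vD add1n; lia.
  case/forall_inPn => e0 e0E; rewrite -ltnNge => Hc.
  have pe0 := forall_inP pD e0 e0E.
  have Heq : e0 :&: (v |: D) = (if v \in e0 then v |: (e0 :&: D) else e0 :&: D).
    apply/setP => x; case: ifP => ve0; rewrite !inE; case: (eqVneq x v) => [->|] //=.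
      by rewrite ve0.
    by rewrite ve0.
  move: Hc; rewrite Heq; case: ifP => ve0; last by rewrite ltnNge pe0.
  rewrite cardsU1 inE (negbTE vD) andbF add1n ltnS => H1.
  exists e0 => //; by rewrite ve0 eqn_leq pe0 H1.
pose E' := [set e in E | #|e :&: D| != 1].
have [D' HD'] : exists D' : 'I_t -> {set 'I_m},
    forall e, e \in E' -> exists k, #|e :&: D' k| == 1.
  apply: IH.
    by move=> e; rewrite inE => /andP [eE _]; apply: Hne.
  move=> v.
  have sub : [set e in E' | v \in e] \subset [set e in E | v \in e].
    by apply/subsetP => e; rewrite !inE => /andP [/andP [-> _] ->].
  case: (eqVneq [set e in E | v \in e] set0) => [H0|/set0Pn [e]].
    by move: (subset_leq_card sub); rewrite H0 cards0 leqn0 => /eqP ->.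
  rewrite inE => /andP [eE ve].
  have [e0 e0E /andP [ve0 He0]] := key e v eE ve.
  rewrite -ltnS; apply: leq_trans (Hdeg v); apply: proper_card.
  apply/properP; split => //; exists e0; rewrite !inE ?e0E ?ve0 //.
  by rewrite He0.
exists (fun k => match unlift ord_max k with Some k' => D' k' | None => D end).
move=> e eE.
case: (boolP (#|e :&: D| == 1)) => He.
  by exists ord_max; rewrite unlift_none.
have [k Hk] : exists k, #|e :&: D' k| == 1 by apply: HD'; rewrite inE eE He.
by exists (lift ord_max k); rewrite liftK.
Qed.

Lemma upper_scheme m n (R : 'I_n -> {set 'I_m}) (F : fieldType) :
  (forall i, R i != set0) -> has_picod_scheme R F (max_degree R).
Proof.
move=> HR.
have Hne : forall e, e \in picod_edges R -> e != set0.
  by move=> e /imsetP [i _ ->].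
have Hdeg : forall v, #|[set e in picod_edges R | v \in e]| <= max_degree R.
  move=> v; have := @leq_bigmax _ (vdegree R) v; by rewrite /vdegree /max_degree.
have [D HD] := upper_sets Hne Hdeg.
exists (fun b => \row_(k < max_degree R) \sum_(v in D k) b ord0 v)%R.
move=> i.
have Ri : R i \in picod_edges R by apply/imsetP; exists i.
have [k /cards1P [j Hj]] := HD (R i) Ri.
have : j \in R i :&: D k by rewrite Hj set11.
rewrite inE => /andP [jR jD].
exists j => //.
exists (fun w s => w ord0 k - \sum_(v in D k | v != j) s ord0 v)%R.
move=> b; rewrite mxE (bigD1 j) //=.
idtac.
have -> : (\sum_(v in D k | v != j) (\row_k0 (if k0 \in side_info R i then b ord0 k0 else 0)) ord0 v
   = \sum_(v in D k | v != j) b ord0 v)%R.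
  apply: eq_bigr => v /andP [vD vj]; rewrite mxE /side_info in_setC.
  case: ifP => // /negbFE vR; exfalso.
  have : v \in R i :&: D k by rewrite inE vR vD.
  by rewrite Hj inE (negbTE vj).
by rewrite addrK.
Qed.

Theorem corollary1 (m n : nat) (R : 'I_n -> {set 'I_m})
  (HR : forall i, R i != set0)
  (Heta : nesting_number R = max_degree R) :
  (forall F : finFieldType, beta_q_eq R F (max_degree R)) /\
  beta_eq R (max_degree R).
Proof.
have low : forall (F : finFieldType) l, has_picod_scheme R F l -> max_degree R <= l.
  move=> F l [phi Hphi]; rewrite -Heta; apply/bigmax_leqP => L HL.
  exact: (@nest_le m n R F l phi Hphi L HL).
split.
  by move=> F; split; [exact: upper_scheme | exact: low].
split; last exact: low.
by exists ('F_2 : finFieldType); apply: upper_scheme.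
Qed.
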